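(* Let $r=(r_0,r_1,r_2,r_3,r_4)\in\mathbb Z^5$ be a quintuple of distinct integers. There is a constant $c=c(r)>0$ such that for every $N\in\mathbb N$ there is a subset $B\subseteq\{0,1,\dots,N-1\}$ with $|B|>Ne^{-c\sqrt{\log N}}$ such that there is no non-constant polynomial $P\in\mathbb Q[x]$ of degree at most $2$ with $P(r_i)\in B$ for all $i=0,\dots,4$.
   Context: The paper phrases the conclusion as ''$B$ does not contain any QC5($r$)'', where a set $\{a_0,\dots,a_4\}\subseteq\mathbb Z$ is QC5($r$) if $a_i=P(r_i)$ for some $P\in\mathbb Q[x]$ of degree at most 2. *)

(* Defs.v *)
From HB Require Import structures.
From mathcomp Require Import all_boot all_order all_algebra.
From mathcomp Require Import all_classical all_reals all_analysis.
From mathcomp Require Import Rstruct.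
Set Implicit Arguments. Unset Strict Implicit. Unset Printing Implicit Defensive.
Import Order.TTheory GRing.Theory Num.Theory.
Local Open Scope ring_scope.

Definition contains_QC5 (r : 'I_5 -> int) (N : nat) (B : {set 'I_N}) : Prop :=
  exists P : {poly rat}, (2 <= size P <= 3)%N /\
    forall i : 'I_5, exists2 b : 'I_N, b \in B & P.[(r i)%:~R] = (nat_of_ord b)%:R.

(* Main.v *)
Require Import Defs.
From HB Require Import structures.
From mathcomp Require Import all_boot all_order all_algebra.
From mathcomp Require Import all_classical all_reals all_analysis.
From mathcomp Require Import Rstruct.
From mathcomp Require Import ring lra zify.
Set Implicit Arguments. Unset Strict Implicit. Unset Printing Implicit Defensive.
Import Order.TTheory GRing.Theory Num.Theory.
Local Open Scope ring_scope.

Definition V (R : comRingType) (x y z : R) := (y - x) * (z - x) * (z - y).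
Definition relq (R : comRingType) (t0 t1 t2 tj z0 z1 z2 zj : R) :=
  V t1 t2 tj * z0 - V t0 t2 tj * z1 + V t0 t1 tj * z2 - V t0 t1 t2 * zj.

Lemma relq_quad (R : comRingType) (a b c t0 t1 t2 tj : R) :
  let q x := a * x ^+ 2 + b * x + c in relq t0 t1 t2 tj (q t0) (q t1) (q t2) (q tj) = 0.
Proof. rewrite /relq /V /=; ring. Qed.

Section Core.
Variable F : realFieldType.
Variables t0 t1 t2 t3 t4 : F.
Hypothesis d01 : t0 != t1.
Hypothesis d02 : t0 != t2.
Hypothesis d03 : t0 != t3.
Hypothesis d04 : t0 != t4.
Hypothesis d12 : t1 != t2.
Hypothesis d13 : t1 != t3.
Hypothesis d14 : t1 != t4.
Hypothesis d23 : t2 != t3.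
Hypothesis d24 : t2 != t4.
Hypothesis d34 : t3 != t4.

Let w0 := ((t0 - t1) * (t0 - t2) * (t0 - t3) * (t0 - t4))^-1.
Let w1 := ((t1 - t0) * (t1 - t2) * (t1 - t3) * (t1 - t4))^-1.
Let w2 := ((t2 - t0) * (t2 - t1) * (t2 - t3) * (t2 - t4))^-1.
Let w3 := ((t3 - t0) * (t3 - t1) * (t3 - t2) * (t3 - t4))^-1.
Let w4 := ((t4 - t0) * (t4 - t1) * (t4 - t2) * (t4 - t3))^-1.
Let S j := w0 * t0 ^+ j + w1 * t1 ^+ j + w2 * t2 ^+ j + w3 * t3 ^+ j + w4 * t4 ^+ j.

Let nz (x y : F) : x != y -> x - y != 0. Proof. by rewrite subr_eq0. Qed.
Let nz' (x y : F) : x != y -> y - x != 0. Proof. by rewrite subr_eq0 eq_sym. Qed.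


Ltac dtac := repeat (apply/andP; split); by rewrite subr_eq0 // eq_sym.

Lemma S0 : S 0 = 0.
Proof. rewrite /S /w0 /w1 /w2 /w3 /w4; field; dtac. Qed.
Lemma S1 : S 1 = 0.
Proof. rewrite /S /w0 /w1 /w2 /w3 /w4; field; dtac. Qed.
Lemma S2 : S 2 = 0.
Proof. rewrite /S /w0 /w1 /w2 /w3 /w4; field; dtac. Qed.
Lemma S3 : S 3 = 0.
Proof. rewrite /S /w0 /w1 /w2 /w3 /w4; field; dtac. Qed.
Lemma S4 : S 4 = 1.
Proof. rewrite /S /w0 /w1 /w2 /w3 /w4; field; dtac. Qed.

Let u0 := ((t0 - t1) * (t0 - t2))^-1.
Let u1 := ((t1 - t0) * (t1 - t2))^-1.
Let u2 := ((t2 - t0) * (t2 - t1))^-1.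
Let U j := u0 * t0 ^+ j + u1 * t1 ^+ j + u2 * t2 ^+ j.
Lemma U0 : U 0 = 0.
Proof. rewrite /U /u0 /u1 /u2; field; dtac. Qed.
Lemma U1 : U 1 = 0.
Proof. rewrite /U /u0 /u1 /u2; field; dtac. Qed.
Lemma U2 : U 2 = 1.
Proof. rewrite /U /u0 /u1 /u2; field; dtac. Qed.

Let La (z0 z1 z2 : F) := z0 * u0 + z1 * u1 + z2 * u2.
Let Lb (z0 z1 z2 : F) := (z1 - z0) / (t1 - t0) - La z0 z1 z2 * (t0 + t1).
Let Lc (z0 z1 z2 : F) := z0 - La z0 z1 z2 * t0 ^+ 2 - Lb z0 z1 z2 * t0.

Lemma lag (z0 z1 z2 z3 z4 : F) :
  relq t0 t1 t2 t3 z0 z1 z2 z3 = 0 -> relq t0 t1 t2 t4 z0 z1 z2 z4 = 0 ->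
  forall A B C, A = La z0 z1 z2 -> B = Lb z0 z1 z2 -> C = Lc z0 z1 z2 ->
  let q x := A * x ^+ 2 + B * x + C in
  [/\ z0 = q t0, z1 = q t1, z2 = q t2, z3 = q t3 & z4 = q t4].
Proof.
move=> r3 r4 A B C -> -> -> q.
have e0 : z0 = q t0 by rewrite /q /Lc; ring.
have e1 : z1 = q t1 by rewrite /q /Lc /Lb /La /u0 /u1 /u2; field; dtac.
have e2 : z2 = q t2 by rewrite /q /Lc /Lb /La /u0 /u1 /u2; field; dtac.
have V0 : V t0 t1 t2 != 0.
  by rewrite /V !mulf_neq0 // subr_eq0 // eq_sym.
have gen tj zj : relq t0 t1 t2 tj z0 z1 z2 zj = 0 -> zj = q tj.
  move=> rj.
  have : relq t0 t1 t2 tj z0 z1 z2 zj - relq t0 t1 t2 tj (q t0) (q t1) (q t2) (q tj) =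
    V t1 t2 tj * (z0 - q t0) - V t0 t2 tj * (z1 - q t1) + V t0 t1 tj * (z2 - q t2)
    - V t0 t1 t2 * (zj - q tj) by rewrite /relq; ring.
  rewrite rj relq_quad -e0 -e1 -e2 !subrr !mulr0 !subr0 add0r sub0r => /eqP.
  by rewrite eq_sym oppr_eq0 mulf_eq0 (negbTE V0) /= subr_eq0 => /eqP.
by split => //; apply: gen.
Qed.

Lemma core n (z0 z1 z2 z3 z4 : 'I_n -> F) (R : F) :
  (forall k, relq t0 t1 t2 t3 (z0 k) (z1 k) (z2 k) (z3 k) = 0) ->
  (forall k, relq t0 t1 t2 t4 (z0 k) (z1 k) (z2 k) (z4 k) = 0) ->
  \sum_k z0 k ^+ 2 = R -> \sum_k z1 k ^+ 2 = R -> \sum_k z2 k ^+ 2 = R ->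
  \sum_k z3 k ^+ 2 = R -> \sum_k z4 k ^+ 2 = R ->
  forall k, z1 k = z0 k /\ z2 k = z0 k.
Proof.
move=> r3 r4 s0 s1 s2 s3 s4.
pose a k := La (z0 k) (z1 k) (z2 k).
pose b k := Lb (z0 k) (z1 k) (z2 k).
pose c k := Lc (z0 k) (z1 k) (z2 k).
have Q k := lag (r3 k) (r4 k) (erefl (a k)) (erefl (b k)) (erefl (c k)).
have D4 k : w0 * z0 k ^+ 2 + w1 * z1 k ^+ 2 + w2 * z2 k ^+ 2 + w3 * z3 k ^+ 2
    + w4 * z4 k ^+ 2 = a k ^+ 2.
  have [-> -> -> -> ->] := Q k.
  have -> : forall A B C : F,
    w0 * (A * t0 ^+ 2 + B * t0 + C) ^+ 2 + w1 * (A * t1 ^+ 2 + B * t1 + C) ^+ 2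
    + w2 * (A * t2 ^+ 2 + B * t2 + C) ^+ 2 + w3 * (A * t3 ^+ 2 + B * t3 + C) ^+ 2
    + w4 * (A * t4 ^+ 2 + B * t4 + C) ^+ 2 =
    A ^+ 2 * S 4 + 2 * A * B * S 3 + (B ^+ 2 + 2 * A * C) * S 2 + 2 * B * C * S 1
    + C ^+ 2 * S 0.
    by move=> A B C; rewrite /S; ring.
  by rewrite S0 S1 S2 S3 S4; ring.
have sa : \sum_k a k ^+ 2 = 0.
  rewrite -(eq_bigr _ (fun k _ => D4 k)) !big_split /= -!mulr_sumr s0 s1 s2 s3 s4.
  have -> : w0 * R + w1 * R + w2 * R + w3 * R + w4 * R = R * S 0 by rewrite /S; ring.
  by rewrite S0 mulr0.
have a0 k : a k = 0.
  have := @psumr_eq0P _ _ _ _ (fun i _ => sqr_ge0 (a i)) sa k isT.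
  by move/eqP; rewrite sqrf_eq0 => /eqP.
have D2 k : u0 * z0 k ^+ 2 + u1 * z1 k ^+ 2 + u2 * z2 k ^+ 2 = b k ^+ 2.
  have [-> -> -> _ _] := Q k.
  rewrite a0.
  have -> : forall B C : F,
    u0 * (0 * t0 ^+ 2 + B * t0 + C) ^+ 2 + u1 * (0 * t1 ^+ 2 + B * t1 + C) ^+ 2
    + u2 * (0 * t2 ^+ 2 + B * t2 + C) ^+ 2 =
    B ^+ 2 * U 2 + 2 * B * C * U 1 + C ^+ 2 * U 0.
    by move=> B C; rewrite /U; ring.
  by rewrite U0 U1 U2; ring.
have sb : \sum_k b k ^+ 2 = 0.
  rewrite -(eq_bigr _ (fun k _ => D2 k)) !big_split /= -!mulr_sumr s0 s1 s2.
  have -> : u0 * R + u1 * R + u2 * R = R * U 0 by rewrite /U; ring.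
  by rewrite U0 mulr0.
have b0 k : b k = 0.
  have := @psumr_eq0P _ _ _ _ (fun i _ => sqr_ge0 (b i)) sb k isT.
  by move/eqP; rewrite sqrf_eq0 => /eqP.
move=> k; have [-> -> -> _ _] := Q k.
rewrite a0 b0 !mul0r !add0r; split; by [].
Qed.
End Core.

Lemma carry (d : int) n (c : 'I_n -> int) : 0 < d -> (forall k, `|c k| < d) ->
  \sum_(k < n) c k * d ^+ k = 0 -> forall k, c k = 0.
Proof.
move=> d0; elim: n c => [|n IH] c hc hs k; first by case: k.
move: hs; rewrite big_ord_recl expr0 mulr1.
have -> : \sum_(i < n) c (lift ord0 i) * d ^+ (bump 0 i) =
          d * \sum_(i < n) c (lift ord0 i) * d ^+ i.
  by rewrite mulr_sumr; apply: eq_bigr => i _; rewrite /bump /= add1n exprS; ring.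
set S := \sum_(i < n) _ => hs.
have hc0 := hc ord0.
have S0 : S = 0.
  have e : c ord0 = - (d * S) by apply/eqP; rewrite -addr_eq0 hs.
  move: hc0; rewrite e normrN normrM (gtr0_norm d0) => h.
  have : `|S| < 1 by rewrite -(ltr_pM2l d0) mulr1.
  by move=> h1; lia.
have c0 : c ord0 = 0 by move: hs; rewrite S0 mulr0 addr0.
have IH' := IH (fun i => c (lift ord0 i)) (fun i => hc _) S0.
by case: (unliftP ord0 k) => [j -> | ->] //.
Qed.

Lemma bound4 (A B C D z0 z1 z2 zj M : int) : 0 <= z0 <= M -> 0 <= z1 <= M -> 0 <= z2 <= M ->
  0 <= zj <= M -> `|A * z0 - B * z1 + C * z2 - D * zj| <= (`|A| + `|B| + `|C| + `|D|) * M.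
Proof. move=> *; nia. Qed.

Lemma horner3 (P : {poly rat}) x : (size P <= 3)%N ->
  P.[x] = P`_0 + P`_1 * x + P`_2 * x ^+ 2.
Proof.
move=> h; rewrite (horner_coef_wide x h) !big_ord_recr big_ord0 /=.
by rewrite expr0 expr1 mulr1 add0r.
Qed.

Lemma const3 (P : {poly rat}) x0 x1 x2 : (size P <= 3)%N ->
  x0 != x1 -> x0 != x2 -> x1 != x2 -> P.[x0] = P.[x1] -> P.[x0] = P.[x2] ->
  (size P <= 1)%N.
Proof.
move=> hs d01 d02 d12; rewrite !horner3 // => e1 e2.
have h1 : (x0 - x1) * (P`_1 + P`_2 * (x0 + x1)) =
  (P`_0 + P`_1 * x0 + P`_2 * x0 ^+ 2) - (P`_0 + P`_1 * x1 + P`_2 * x1 ^+ 2) by ring.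
rewrite e1 subrr in h1.
move/eqP: h1; rewrite mulf_eq0 subr_eq0 (negbTE d01) /= => /eqP h1.
have h2 : (x0 - x2) * (P`_1 + P`_2 * (x0 + x2)) =
  (P`_0 + P`_1 * x0 + P`_2 * x0 ^+ 2) - (P`_0 + P`_1 * x2 + P`_2 * x2 ^+ 2) by ring.
rewrite e2 subrr in h2.
move/eqP: h2; rewrite mulf_eq0 subr_eq0 (negbTE d02) /= => /eqP h2.
have h3 : P`_2 * (x1 - x2) = (P`_1 + P`_2 * (x0 + x1)) - (P`_1 + P`_2 * (x0 + x2)) by ring.
rewrite h1 h2 subrr in h3.
move/eqP: h3; rewrite mulf_eq0 subr_eq0 (negbTE d12) orbF => /eqP p2.
have p1 : P`_1 = 0 by move: h1; rewrite p2 mul0r addr0.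
apply/leq_sizeP => j; case: j => [|[|[|j]]] // _.
by rewrite nth_default //; apply: leq_trans hs _.
Qed.

Definition o0 : 'I_5 := @Ordinal 5 0 isT.
Definition o1 : 'I_5 := @Ordinal 5 1 isT.
Definition o2 : 'I_5 := @Ordinal 5 2 isT.
Definition o3 : 'I_5 := @Ordinal 5 3 isT.
Definition o4 : 'I_5 := @Ordinal 5 4 isT.

Lemma rdist (r : 'I_5 -> int) (hr : injective r) (i j : 'I_5) : i != j ->
  ((r i)%:~R : rat) != (r j)%:~R.
Proof. by rewrite eqr_int (inj_eq hr). Qed.

Lemma no_qc5_small (r : 'I_5 -> int) (hr : injective r) N (B : {set 'I_N}) :
  (#|B| <= 1)%N -> ~ contains_QC5 r B.
Proof.
move=> /card_le1_eqP hB [P [/andP [s2 s3] hP]].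
have [b0 B0 e0] := hP o0.
have [b1 B1 e1] := hP o1.
have [b2 B2 e2] := hP o2.
have := const3 s3 (rdist hr (i:=o0) (j:=o1) isT) (rdist hr (i:=o0) (j:=o2) isT)
  (rdist hr (i:=o1) (j:=o2) isT).
rewrite e0 e1 e2 -(hB _ _ B1 B0) -(hB _ _ B2 B0) => /(_ erefl erefl).
by rewrite leqNgt s2.
Qed.

Lemma digits_lt n (F : 'I_n -> nat) (d : nat) : (forall k, F k < d)%N ->
  (\sum_(k < n) F k * d ^ k < d ^ n)%N.
Proof.
elim: n F => [|n IH] F hF; first by rewrite big_ord0 expn0.
rewrite big_ord_recr /= expnS.
have := IH (fun k => F (widen_ord (leqnSn n) k)) (fun k => hF _).
have := hF ord_max.
move: (\sum_(i < n) _)%N (F ord_max) (d ^ n)%N => S Fm D h1 h2.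
nia.
Qed.

Lemma relq_sum (R : comRingType) n (t0 t1 t2 tj : R) (f0 f1 f2 fj : 'I_n -> R) :
  relq t0 t1 t2 tj (\sum_k f0 k) (\sum_k f1 k) (\sum_k f2 k) (\sum_k fj k) =
  \sum_k relq t0 t1 t2 tj (f0 k) (f1 k) (f2 k) (fj k).
Proof.
rewrite /relq !mulr_sumr -!sumrN -!big_split /=.
by [].
Qed.

Lemma relq_intr (t0 t1 t2 tj z0 z1 z2 zj : int) :
  ((relq t0 t1 t2 tj z0 z1 z2 zj)%:~R : rat) =
  relq t0%:~R t1%:~R t2%:~R tj%:~R z0%:~R z1%:~R z2%:~R zj%:~R.
Proof. by rewrite /relq /V !(intrD, intrN, intrM). Qed.

Definition Lam (t0 t1 t2 tj : int) : int :=
  `|V t1 t2 tj| + `|V t0 t2 tj| + `|V t0 t1 tj| + `|V t0 t1 t2|.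

Lemma digit_rel (t0 t1 t2 tj : int) n m (d : nat) (x0 x1 x2 xj : 'I_n -> 'I_m) :
  Lam t0 t1 t2 tj * m%:Z < d%:Z ->
  relq (t0%:~R : rat) t1%:~R t2%:~R tj%:~R (\sum_k (x0 k * d ^ k)%N)%:R
    (\sum_k (x1 k * d ^ k)%N)%:R (\sum_k (x2 k * d ^ k)%N)%:R (\sum_k (xj k * d ^ k)%N)%:R = 0 ->
  forall k, relq (t0%:~R : rat) t1%:~R t2%:~R tj%:~R (x0 k)%:R (x1 k)%:R (x2 k)%:R (xj k)%:R = 0.
Proof.
move=> hd h.
have cast (a : nat) : (a%:R : rat) = (a%:Z)%:~R by rewrite -pmulrn.
have hZ : relq t0 t1 t2 tj (\sum_k (x0 k)%:Z * d%:Z ^+ k) (\sum_k (x1 k)%:Z * d%:Z ^+ k)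
   (\sum_k (x2 k)%:Z * d%:Z ^+ k) (\sum_k (xj k)%:Z * d%:Z ^+ k) = 0.
  apply/eqP; rewrite -(intr_eq0 rat) relq_intr; apply/eqP.
  rewrite -[X in _ = X]h !cast.
  by congr relq; congr intmul; rewrite -[RHS]natz natr_sum; apply: eq_bigr => k _;
     rewrite natrM natrX !natz.
have hZ' : \sum_k relq t0 t1 t2 tj (x0 k)%:Z (x1 k)%:Z (x2 k)%:Z (xj k)%:Z * d%:Z ^+ k = 0.
  rewrite -[RHS]hZ relq_sum; apply: eq_bigr => k _; rewrite /relq; ring.
have d0 : 0 < d%:Z.
  apply: le_lt_trans hd; apply: mulr_ge0; last by [].
  by rewrite /Lam !addr_ge0.
have hb k : `|relq t0 t1 t2 tj (x0 k)%:Z (x1 k)%:Z (x2 k)%:Z (xj k)%:Z| < d%:Z.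
  apply: le_lt_trans hd; rewrite /relq /Lam; apply: bound4;
  by apply/andP; split; rewrite ?lez_nat // ltnW.
move=> k; have := carry d0 hb hZ' k.
by move=> /(congr1 (fun z : int => (z%:~R : rat))); rewrite relq_intr -!cast.
Qed.

Lemma encZ n (d : nat) (x : 'I_n -> nat) :
  ((\sum_(k < n) x k * d ^ k)%N)%:Z = \sum_(k < n) (x k)%:Z * d%:Z ^+ k.
Proof. by rewrite -[LHS]natz natr_sum; apply: eq_bigr => k _; rewrite natrM natrX !natz. Qed.

Lemma behrend (r : 'I_5 -> int) (hr : injective r) : exists C : nat, (0 < C)%N /\
  forall N n m : nat, (0 < n)%N -> (0 < m)%N -> ((C * m) ^ n <= N)%N ->
  exists B : {set 'I_N}, (m ^ n <= #|B| * (n * m ^ 2 + 1))%N /\ ~ contains_QC5 r B.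
Proof.
pose L3 := Lam (r o0) (r o1) (r o2) (r o3).
pose L4 := Lam (r o0) (r o1) (r o2) (r o4).
have L3p : 0 <= L3 by rewrite /L3 /Lam !addr_ge0.
have L4p : 0 <= L4 by rewrite /L4 /Lam !addr_ge0.
exists (absz (L3 + L4)).+1; split => //.
move=> N n m n0 m0 hN.
set C := (absz (L3 + L4)).+1 in hN.
pose d := (C * m)%N.
have dZ : d%:Z = (L3 + L4 + 1) * m%:Z.
  rewrite /d /C PoszM -addn1 PoszD gez0_abs //; exact: addr_ge0.
have hd3 : L3 * m%:Z < d%:Z by rewrite dZ; move: L3p L4p m0 => *; nia.
have hd4 : L4 * m%:Z < d%:Z by rewrite dZ; move: L3p L4p m0 => *; nia.
have dm : (m <= d)%N by rewrite /d leq_pmull.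
pose X := {ffun 'I_n -> 'I_m}.
pose enc (x : X) := (\sum_(k < n) x k * d ^ k)%N.
have enc_lt x : (enc x < N)%N.
  apply: leq_trans hN; apply: digits_lt => k.
  exact: leq_trans (ltn_ord _) dm.
have enc_inj : injective enc.
  move=> x y e.
  have hs : \sum_(k < n) ((x k)%:Z - (y k)%:Z) * d%:Z ^+ k = 0.
    rewrite (eq_bigr _ (fun k _ => mulrBl _ _ _)) sumrB.
    rewrite -(encZ d (fun k => nat_of_ord (x k))) -(encZ d (fun k => nat_of_ord (y k))).
    by rewrite -/(enc x) -/(enc y) e subrr.
  have d0 : 0 < d%:Z by rewrite ltz_nat; apply: leq_trans dm.
  have hb k : `|(x k)%:Z - (y k)%:Z| < d%:Z.
    have := ltn_ord (x k); have := ltn_ord (y k); move: dm => *; lia.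
  apply/ffunP => k; apply/val_inj.
  by have := carry d0 hb hs k; move/eqP; rewrite subr_eq0 eqz_nat => /eqP.
pose nrm (x : X) := (\sum_(k < n) (x k : nat) ^ 2)%N.
pose K := (n * m ^ 2).+1.
have nrm_lt x : (nrm x < K)%N.
  rewrite ltnS /nrm.
  apply: (@leq_trans (\sum_(k < n) m ^ 2)).
    by apply: leq_sum => k _; rewrite leq_exp2r // ltnW.
  by rewrite sum_nat_const card_ord.
pose g (x : X) : 'I_K := Ordinal (nrm_lt x).
pose fib (R : 'I_K) := [set x : X | g x == R].
have [R _ HR] := @arg_maxnP _ (@ord0 (n * m ^ 2)) predT (fun R => #|fib R|) isT.
have big : (m ^ n <= #|fib R| * K)%N.
  have cX : #|X| = (m ^ n)%N by rewrite card_ffun !card_ord.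
  have eX : #|X| = (\sum_(j < K) #|fib j|)%N.
    rewrite -[#|X|]sum1_card (partition_big g predT) //=.
    apply: eq_bigr => j _; rewrite -sum1_card; apply: eq_bigl => i; rewrite inE.
    by [].
  rewrite -cX eX; apply: (@leq_trans (\sum_(j < K) #|fib R|)).
    by apply: leq_sum => j _; exact: HR.
  by rewrite sum_nat_const card_ord mulnC.
pose f (x : X) : 'I_N := Ordinal (enc_lt x).
have finj : injective f by move=> x y /(congr1 val) /= /enc_inj.
exists (f @: fib R); split; first by rewrite (card_imset _ finj) addn1.
move=> [P [/andP [s2 s3] hP]].
have get (i : 'I_5) : exists x : X, nrm x = R /\ P.[(r i)%:~R] = (enc x)%:R.
  have [b bB e] := hP i.
  case/imsetP: bB => x xf bx; exists x; split; last by rewrite e bx.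
  by move: xf; rewrite inE => /eqP /(congr1 val).
have [x0 [n0' e0]] := get o0.
have [x1 [n1' e1]] := get o1.
have [x2 [n2' e2]] := get o2.
have [x3 [n3' e3]] := get o3.
have [x4 [n4' e4]] := get o4.
have rel3 : relq ((r o0)%:~R : rat) (r o1)%:~R (r o2)%:~R (r o3)%:~R
   (enc x0)%:R (enc x1)%:R (enc x2)%:R (enc x3)%:R = 0.
  by rewrite -e0 -e1 -e2 -e3 !horner3 // /relq /V; ring.
have rel4 : relq ((r o0)%:~R : rat) (r o1)%:~R (r o2)%:~R (r o4)%:~R
   (enc x0)%:R (enc x1)%:R (enc x2)%:R (enc x4)%:R = 0.
  by rewrite -e0 -e1 -e2 -e4 !horner3 // /relq /V; ring.
have D3 := digit_rel hd3 rel3.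
have D4 := digit_rel hd4 rel4.
have sq (x : X) : \sum_k ((x k : nat)%:R : rat) ^+ 2 = (nrm x)%:R.
  by rewrite /nrm natr_sum; apply: eq_bigr => k _; rewrite natrX.
have sqR (x : X) : nrm x = R -> \sum_k ((x k : nat)%:R : rat) ^+ 2 = (R : nat)%:R.
  by move=> h; rewrite sq h.
have := core (rdist hr (i:=o0) (j:=o1) isT) (rdist hr (i:=o0) (j:=o2) isT)
  (rdist hr (i:=o0) (j:=o3) isT) (rdist hr (i:=o0) (j:=o4) isT)
  (rdist hr (i:=o1) (j:=o2) isT) (rdist hr (i:=o1) (j:=o3) isT)
  (rdist hr (i:=o1) (j:=o4) isT) (rdist hr (i:=o2) (j:=o3) isT)
  (rdist hr (i:=o2) (j:=o4) isT) (rdist hr (i:=o3) (j:=o4) isT) D3 D4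
  (sqR _ n0') (sqR _ n1') (sqR _ n2') (sqR _ n3') (sqR _ n4') => hc.
have ex1 : x1 = x0.
  apply/ffunP => k; apply/val_inj; have [h _] := hc k.
  by move/eqP: h; rewrite eqr_nat => /eqP.
have ex2 : x2 = x0.
  apply/ffunP => k; apply/val_inj; have [_ h] := hc k.
  by move/eqP: h; rewrite eqr_nat => /eqP.
have := const3 s3 (rdist hr (i:=o0) (j:=o1) isT) (rdist hr (i:=o0) (j:=o2) isT)
  (rdist hr (i:=o1) (j:=o2) isT).
rewrite e0 e1 e2 ex1 ex2 => /(_ erefl erefl).
by rewrite leqNgt s2.
Qed.

Local Notation RR := Rdefinitions.R.

Lemma aux_ineq (Z e E3 : RR) : Z <= E3 -> 0 <= (e - 2) * E3 -> 1 <= E3 -> Z + 1 <= e * E3.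
Proof. move=> *; lra. Qed.

Lemma final_analysis (P : forall N : nat, {set 'I_N} -> Prop) (C : nat) (HC : (0 < C)%N)
 (Hs : forall N : nat, (0 < N)%N -> exists B : {set 'I_N}, #|B| = 1%N /\ P N B)
 (Hb : forall N n m : nat, (0 < n)%N -> (0 < m)%N -> ((C * m)^n <= N)%N ->
     exists B : {set 'I_N}, (m^n <= #|B| * (n * m ^ 2 + 1))%N /\ P N B) :
 exists c : RR, 0 < c /\ forall N : nat, (2 <= N)%N ->
   exists B : {set 'I_N}, N%:R * expR (- (c * Num.sqrt (ln (N%:R : RR)))) < #|B|%:R /\ P N B.
Proof.
have C1 : (1 : RR) <= C%:R by rewrite ler1n.
set K : RR := ln (2 * C%:R).
have eK : expR K = 2 * C%:R by rewrite /K lnK // posrE; lra.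
have K0 : 0 <= K by rewrite /K ln_ge0 //; lra.
exists (6 + K); split; first lra.
move=> N HN.
have N1 : (1 : RR) < N%:R by rewrite ltr1n.
set L : RR := ln N%:R.
have L0 : 0 < L by rewrite /L ln_gt0.
set s := Num.sqrt L.
have s0 : 0 < s by rewrite /s sqrtr_gt0.
have ss : s * s = L by rewrite /s -expr2 sqr_sqrtr // ltW.
have eL : expR L = N%:R by rewrite /L lnK // posrE; lra.
set e := expR s.
have e1s : 1 + s <= e := expR_ge1Dx s.
have se : s <= e by lra.
case: (boolP ((1 <= s) && (2 * C%:R <= e))) => [/andP [s1 e2C] | hneg].
- have e2 : 2 <= e by lra.
  have e1 : 1 <= e by lra.
  set q := e / C%:R.
  have C0 : (0 : RR) < C%:R by lra.
  have q2 : 2 <= q by rewrite /q ler_pdivlMr //; lra.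
  have qe : q <= e.
    rewrite /q ler_pdivrMr //.
    have : e * 1 <= e * C%:R by apply: ler_wpM2l => //; apply: ltW; apply: expR_gt0.
    lra.
  set n := Num.truncn s; set m := Num.truncn q.
  have /andP [hn1 hn2] := truncn_itv (ltW s0).
  have /andP [hm1 hm2] : (m%:R <= q < m.+1%:R) by apply: truncn_itv; lra.
  rewrite -/n in hn1 hn2; rewrite -/m in hm1 hm2.
  rewrite -natr1 in hn2; rewrite -natr1 in hm2.
  have n0 : (0 < n)%N by rewrite truncn_gt0.
  have m0 : (0 < m)%N by rewrite truncn_gt0; lra.
  have e0 : 0 < e by apply: expR_gt0.
  have Hcm : ((C * m) ^ n <= N)%N.
    rewrite -(ler_nat RR) natrX natrM.
    apply: (@le_trans _ _ (e ^+ n)).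
      apply: lerXn2r; rewrite ?nnegrE ?mulr_ge0 //; try lra.
      by move: hm1; rewrite /q ler_pdivlMr // mulrC.
    rewrite /e -expRM_natl -eL -ss ler_expR.
    apply: ler_pM; lra.
  have [B [hB PB]] := Hb N n m n0 m0 Hcm.
  exists B; split => //.
  move: hB; rewrite -(ler_nat RR) natrM natrX natrD natrM natrX => hB.
  set K1 : RR := n%:R * m%:R ^+ 2 + 1 in hB *.
  have K1p : 0 < K1 by rewrite /K1; apply: ltr_wpDl; rewrite ?mulr_ge0 ?exprn_ge0.
  rewrite -(ltr_pM2r K1p); apply: lt_le_trans hB.
  have mlo : expR (s - K) <= m%:R.
    rewrite exp.expRD expRN eK.
    have -> : e / (2 * C%:R) = q / 2 by rewrite /q; field; lra.
    lra.
  have mn : expR (s * s - s - s * K) <= m%:R ^+ n.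
    apply: (@le_trans _ _ (expR (s - K) ^+ n)); last first.
      apply: lerXn2r; rewrite ?nnegrE //; try lra; apply: ltW; apply: expR_gt0.
    rewrite -expRM_natl ler_expR.
    have h1 : 0 <= (n%:R - (s - 1)) * s by apply: mulr_ge0; lra.
    have h2 : 0 <= (s - n%:R) * K by apply: mulr_ge0; lra.
    lra.
  have K1e : K1 <= expR (4%:R * s).
    rewrite expRM_natl -/e /K1.
    have m2 : m%:R ^+ 2 <= e ^+ 2.
      rewrite !expr2.
      apply: ler_pM.
      exact: ler0n.
      exact: ler0n.
      exact: le_trans hm1 qe.
      exact: le_trans hm1 qe.
    have : n%:R * m%:R ^+ 2 <= e * e ^+ 2.
      apply: ler_pM => //; try exact: ler0n; try exact: exprn_ge0; exact: le_trans hn1 se.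
    have e3 : 1 <= e ^+ 3 by rewrite exprn_ege1.
    have -> : e ^+ 4 = e * e ^+ 3 by rewrite exprS.
    have -> : e * e ^+ 2 = e ^+ 3 by rewrite exprS.
    have : 0 <= (e - 2) * e ^+ 3 by apply: mulr_ge0; [rewrite subr_ge0 | apply: exprn_ge0; apply: ltW].
    move=> h4 h5; exact: aux_ineq h5 h4 e3.
  apply: (@le_lt_trans _ _ (expR (s * s) * expR (- ((6 + K) * s)) * expR (4%:R * s))).
    rewrite -eL -ss; apply: ler_wpM2l => //; apply: mulr_ge0; apply: ltW; apply: expR_gt0.
  rewrite -!exp.expRD; apply: lt_le_trans mn; rewrite ltr_expR.
  have h3 : 0 < (1 + K) * s by apply: mulr_gt0; lra.
  lra.
- have [B [cB PB]] := Hs N (ltnW HN).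
  exists B; split => //; rewrite cB.
  have sc : s < 6 + K.
    case: (lerP 1 s) hneg => /= [s1 | ]; last lra.
    rewrite -ltNge -eK ltr_expR; lra.
  rewrite -eL -ss. rewrite -exp.expRD expR_lt1; nra.
Qed.

Unset Implicit Arguments.

Theorem theorem12p7 (r : 'I_5 -> int) (hr : injective r) :
  exists c : Rdefinitions.R, 0 < c /\
    forall N : nat, (2 <= N)%N ->
      exists B : {set 'I_N},
        (N%:R * expR (- (c * Num.sqrt (ln (N%:R : Rdefinitions.R)))) < #|B|%:R)
        /\ ~ contains_QC5 r B.
Proof.
have [C [C0 HC]] := behrend hr.
apply: (final_analysis (P := fun N B => ~ contains_QC5 r B) C0 _ HC).
move=> N N0.
exists [set Ordinal N0]; rewrite cards1; split => //.
by apply: no_qc5_small => //; rewrite cards1.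
Qed.
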